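(* Let $u\in\mathcal M$ and $w=P_Wu$, and set $\mathcal M_w=\mathcal M\cap V_w$. For $k=1,\dots,K$ define the ellipsoids $$\mathcal E_k=\{v\in V_w:\operatorname{dist}(v,V_k)\le\varepsilon_k\}.$$ Let $S=\{k:\ \mathcal S(u_k^*(w),\mathcal M_k)\le R\mu_k\varepsilon_k\}$ and $\mathcal M_w^*=\bigcup_{k\in S}\mathcal E_k$. Then $\mathcal M_w\subset\mathcal M_w^*$. If moreover the family is $\sigma$-admissible for some $\sigma>0$, then $$\sup_{v\in\mathcal M_w^*}\ \inf_{u'\in\mathcal M_w}\|v-u'\|\le\delta_{(\kappa+1)\sigma},\qquad \kappa=R/r.$$
   Context: Let $V$ be a real Hilbert space with norm $\|\cdot\|$. Let $Y\subset\mathbb R^d$ be compact and let $y\mapsto u(y)$ be a continuous map from $Y$ to $V$. Set $\mathcal M=\{u(y):y\in Y\}$, which is compact. Let $W\subset V$ be a linear subspace of finite dimension $m$, let $P_W$ be the orthogonal projection onto $W$, and let $W^\perp$ be its orthogonal complement. For $w\in W$ put $V_w=w+W^\perp$. For $\sigma\ge 0$ define - $\mathcal M_\sigma=\{v\in V:\operatorname{dist}(v,\mathcal M)\le\sigma\}$; - $\delta_\sigma=\sup\{\|u-v\|: u,v\in\mathcal M_\sigma,\ u-v\in W^\perp\}$. For a finite-dimensional subspace $E\subset V$ let $\mu(E,W)=\sup_{v\in E\setminus\{0\}}\|v\|/\|P_Wv\|$, with the conventions $\mu(\{0\},W)=1$ and $\mu(E,W)=+\infty$ if $E\cap W^\perp\ne\{0\}$.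 A reduced model family consists of: - sets $\mathcal M_1,\dots,\mathcal M_K$ with $\mathcal M=\bigcup_{k=1}^K\mathcal M_k$; - affine spaces $V_k=\bar u_k+\bar V_k$, where $\bar u_k\in V$ and $\bar V_k$ is a linear subspace of dimension $n_k\le m$; - numbers $\varepsilon_k\ge\sup_{u\in\mathcal M_k}\operatorname{dist}(u,V_k)$; - constants $\mu_k=\mu(\bar V_k,W)<\infty$. The family is $\sigma$-admissible if $\mu_k\varepsilon_k\le\sigma$ for all $k$. For $w\in W$ the PBDW estimators are $u_k^*(w)=\operatorname{argmin}\{\operatorname{dist}(v,V_k): v\in V_w\}$, $k=1,\dots,K$ (the minimizer is unique). Here the surrogate is local: for each $k$, $\mathcal S(\cdot,\mathcal M_k):V\to[0,\infty)$ satisfies $r\operatorname{dist}(v,\mathcal M_k)\le\mathcal S(v,\mathcal M_k)\le R\operatorname{dist}(v,\mathcal M_k)$ for all $v\in V$, where $0<r\le R$ are constants; set $\kappa=R/r$. *)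

(* Defs.v *)
From HB Require Import structures.
From mathcomp Require Import all_boot all_order all_algebra.
From mathcomp Require Import all_classical all_reals all_analysis.
Set Implicit Arguments. Unset Strict Implicit. Unset Printing Implicit Defensive.
Import Order.TTheory GRing.Theory Num.Theory.
Import numFieldNormedType.Exports.
Local Open Scope classical_set_scope.
Local Open Scope ring_scope.

Section Defs.
Variables (R : realType) (V : normedModType R).

(* real inner product inducing the norm of V (together with completeness of V
   this makes V a real Hilbert space) *)
Record inner_product (ip : V -> V -> R) : Prop := {
  ip_sym : forall x y, ip x y = ip y x;
  ip_linl : forall (a : R) x y z, ip (a *: x + y) z = a * ip x z + ip y z;
  ip_norm : forall x, ip x x = `|x| ^+ 2 }.

Definition lin_indep (n : nat) (b : 'I_n -> V) : Prop :=
  forall c : 'I_n -> R, \sum_(i < n) c i *: b i = 0 -> forall i, c i = 0.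
Definition span (n : nat) (b : 'I_n -> V) : set V :=
  [set v | exists c : 'I_n -> R, v = \sum_(i < n) c i *: b i].

Definition subspace_dim (E : set V) (n : nat) : Prop :=
  exists b : 'I_n -> V, lin_indep b /\ span b = E.

Definition orth (ip : V -> V -> R) (W : set V) : set V :=
  [set x | forall y, W y -> ip x y = 0].

Definition is_orth_proj (ip : V -> V -> R) (W : set V) (P : V -> V) : Prop :=
  forall v, W (P v) /\ orth ip W (v - P v).

Definition affine (a : V) (E : set V) : set V := [set a + x | x in E].

(* distance to a set (= +oo for the empty set) *)
Definition dist (v : V) (A : set V) : \bar R :=
  ereal_inf [set (`|v - a|)%:E | a in A].

Definition Msig (M : set V) (s : R) : set V := [set v | (dist v M <= s%:E)%E].

Definition delta (ip : V -> V -> R) (W M : set V) (s : R) : \bar R :=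
  ereal_sup [set (`|p.1 - p.2|)%:E | p in
     [set p : V * V | Msig M s p.1 /\ Msig M s p.2 /\ orth ip W (p.1 - p.2)]].

Definition mu (ip : V -> V -> R) (W : set V) (P : V -> V) (E : set V) : \bar R :=
  if `[< exists v, E v /\ v <> 0 /\ orth ip W v >] then +oo%E
  else if `[< forall v, E v -> v = 0 >] then 1%E
  else ereal_sup [set (`|v| / `|P v|)%:E | v in E `\ 0].

End Defs.

(* Main.v *)
Require Import Defs.
From HB Require Import structures.
From mathcomp Require Import all_boot all_order all_algebra.
From mathcomp Require Import all_classical all_reals all_analysis.
From mathcomp Require Import ring lra.
Set Implicit Arguments. Unset Strict Implicit.
Import Order.TTheory GRing.Theory Num.Theory.
Import numFieldNormedType.Exports.
Local Open Scope classical_set_scope.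
Local Open Scope ring_scope.

Lemma alg_ineq (R : realFieldType) (x a s m : R) : 1 <= m -> 0 <= a -> 0 <= s ->
  a^+2 <= (m - 1) * s^+2 -> (x + a)^+2 <= m * (x^+2 + s^+2).
Proof.
move=> m1 a0 s0 h.
have h1 : 0 <= (m - 1) * (m * (x^+2 + s^+2) - (x + a)^+2).
  have e : (m - 1) * (m * (x^+2 + s^+2) - (x + a)^+2) =
     ((m-1)*x - a)^+2 + m * ((m-1)*s^+2 - a^+2) by ring.
  rewrite e; apply: addr_ge0; first exact: sqr_ge0.
  apply: mulr_ge0; lra.
case: (ltrgtP m 1) => hm; first lra.
  rewrite -subr_ge0. move: h1; rewrite pmulr_rge0 //; lra.
subst m. have : a^+2 <= 0 by lra.
have : 0 <= a^+2 by exact: sqr_ge0.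
move=> p q; have a00 : a^+2 = 0 by lra.
have -> : a = 0 by apply/eqP; have := expf_eq0 a 2; rewrite a00 eqxx /= => <-.
rewrite addr0 mul1r; have := sqr_ge0 s; lra.
Qed.

Lemma subBB (V : zmodType) (x y u w : V) : (x - y) - (u - w) = (x - u) - (y - w).
Proof. rewrite !opprB addrACA [RHS]addrACA; congr (_ + _); exact: addrC. Qed.
Lemma addBB (V : zmodType) (x y u w : V) : (x - y) + (u - w) = (x + u) - (y + w).
Proof. by rewrite opprD addrACA. Qed.

Section H.
Variables (R : realType) (V : normedModType R).

Lemma dist_ge0 (v : V) A : (0 <= dist v A)%E.
Proof. apply/ereal_infP => _ [a _ <-]; by rewrite lee_fin. Qed.

Lemma dist_le (v : V) A a : A a -> (dist v A <= (`|v - a|)%:E)%E.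
Proof. by move=> Aa; apply: ereal_inf_lbound; exists a. Qed.

Lemma dist_approx (v : V) A (x d : R) : (dist v A <= x%:E)%E -> 0 < d ->
  exists a, A a /\ `|v - a| < x + d.
Proof.
move=> h d0; apply/not_existsP => hn.
have : ((x + d)%:E <= dist v A)%E.
  apply/ereal_infP => _ [a Aa <-]; rewrite lee_fin.
  have := hn a; rewrite not_andP => -[//|]; by move/negP; rewrite -leNgt.
move=> h2; have := le_trans h2 h; rewrite lee_fin => h3.
by move: (ltr_pwDr d0 (lexx x)); rewrite ltNge h3.
Qed.

Lemma dist_ub (v : V) A (x : R) :
  (forall d, 0 < d -> exists a, A a /\ `|v - a| <= x + d) -> (dist v A <= x%:E)%E.
Proof.
move=> h; apply/lee_addgt0Pr => e e0; have [a [Aa ha]] := h e e0.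
rewrite -EFinD. have := @dist_le v A a Aa. move/le_trans; apply; by rewrite lee_fin.
Qed.

Lemma dist_sub (v : V) A B : A `<=` B -> (dist v B <= dist v A)%E.
Proof.
move=> AB; apply/ereal_infP => _ [a Aa <-]; exact: (@dist_le v B a (AB _ Aa)).
Qed.

End H.

Section IP.
Variables (R : realType) (V : normedModType R) (ip : V -> V -> R)
  (hip : inner_product ip).

Lemma ip0l y : ip 0 y = 0.
Proof.
have := ip_linl hip 1 0 0 y; rewrite scaler0 addr0 mul1r => h.
by have := subrr (ip 0 y); rewrite {1}h addrK.
Qed.

Lemma ipDl x y z : ip (x + y) z = ip x z + ip y z.
Proof. by have := ip_linl hip 1 x y z; rewrite scale1r mul1r. Qed.

Lemma ipZl a x z : ip (a *: x) z = a * ip x z.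
Proof. by have := ip_linl hip a x 0 z; rewrite addr0 ip0l addr0. Qed.

Lemma ipNl x z : ip (- x) z = - ip x z.
Proof. by rewrite -scaleN1r ipZl mulN1r. Qed.

Lemma ipBl x y z : ip (x - y) z = ip x z - ip y z.
Proof. by rewrite ipDl ipNl. Qed.

Lemma ipDr x y z : ip z (x + y) = ip z x + ip z y.
Proof. by rewrite ip_sym // ipDl // !(ip_sym hip z). Qed.

Lemma ipZr a x z : ip z (a *: x) = a * ip z x.
Proof. by rewrite ip_sym // ipZl // (ip_sym hip z). Qed.

Lemma ipNr x z : ip z (- x) = - ip z x.
Proof. by rewrite ip_sym // ipNl // (ip_sym hip z). Qed.

Lemma ipBr x y z : ip z (x - y) = ip z x - ip z y.
Proof. by rewrite ipDr ipNr. Qed.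

Lemma normD2 x y : `|x + y| ^+ 2 = `|x| ^+ 2 + 2 * ip x y + `|y| ^+ 2.
Proof.
rewrite -!(ip_norm hip) ipDl !ipDr (ip_sym hip y x); ring.
Qed.

Lemma orthL W x y a : orth ip W x -> orth ip W y -> orth ip W (a *: x + y).
Proof. by move=> hx hy z Wz; rewrite ip_linl // hx // hy // mulr0 addr0. Qed.

Lemma orthB W x y : orth ip W x -> orth ip W y -> orth ip W (x - y).
Proof. by move=> hx hy; rewrite addrC -scaleN1r; apply: orthL. Qed.

Lemma affine_orth W w x y : affine w (orth ip W) x -> affine w (orth ip W) y ->
  orth ip W (x - y).
Proof. move=> [a ha <-] [b hb <-]; rewrite opprD addrACA subrr add0r; exact: orthB. Qed.

Lemma affine_orthD W w x z : affine w (orth ip W) x -> orth ip W z ->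
  affine w (orth ip W) (x + z).
Proof.
move=> [a ha <-] hz; exists (a + z); last by rewrite addrA.
by rewrite -[a]scale1r; apply: orthL.
Qed.

End IP.

Section Span.
Variables (R : realType) (V : normedModType R).

Lemma span0 n (b : 'I_n -> V) : Defs.span b 0.
Proof. exists (fun=> 0); rewrite big1 // => i _; exact: scale0r. Qed.

Lemma spanL n (b : 'I_n -> V) a x y : Defs.span b x -> Defs.span b y -> Defs.span b (a *: x + y).
Proof.
move=> [cx ->] [cy ->]; exists (fun i => a * cx i + cy i).
rewrite scaler_sumr -big_split; apply: eq_bigr => i _; by rewrite scalerDl scalerA.
Qed.

Lemma subspaceL (E : set V) k a x y : subspace_dim E k -> E x -> E y -> E (a *: x + y).
Proof. move=> [b [_ <-]]; exact: spanL. Qed.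

Lemma subspace0 (E : set V) k : subspace_dim E k -> E 0.
Proof. move=> [b [_ <-]]; exact: span0. Qed.

Lemma subspaceB (E : set V) k x y : subspace_dim E k -> E x -> E y -> E (x - y).
Proof. move=> hE hx hy; have := subspaceL (-1) hE hy hx; by rewrite scaleN1r addrC. Qed.
End Span.

Section Mu.
Variables (R : realType) (V : normedModType R) (ip : V -> V -> R)
  (hip : inner_product ip) (W : set V) (P : V -> V) (hP : is_orth_proj ip W P).

Lemma pythag g : `|g| ^+ 2 = `|P g| ^+ 2 + `|g - P g| ^+ 2.
Proof.
have e : g = P g + (g - P g) by rewrite addrC subrK.
rewrite {1}e (normD2 hip (P g) (g - P g)) (ip_sym hip) ((hP g).2 _ (hP g).1); ring.
Qed.

Lemma mu_facts (E : set V) mk : mu ip W P E = mk%:E ->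
  1 <= mk /\ forall g, E g -> `|g| ^+ 2 <= mk ^+ 2 * `|P g| ^+ 2.
Proof.
rewrite /mu; case: asboolP => [//|hn1]; case: asboolP => [hall [<-] | hn2 hsup].
  split => // g /hall ->; rewrite normr0 expr0n /= mulr_ge0 //; exact: sqr_ge0.
have key : forall g, E g -> g <> 0 -> P g != 0 /\ `|g| / `|P g| <= mk.
  move=> g Eg g0; split.
    apply/negP => /eqP Pg0; apply: hn1; exists g; split => //; split => //.
    by have := (hP g).2; rewrite Pg0 subr0.
  rewrite -lee_fin -hsup; apply: ereal_sup_ubound; exists g => //; split => //.
split.
  have [g [Eg g0]] : exists g, E g /\ g <> 0.
    apply/not_existsP => hn; apply: hn2 => g Eg; have := hn g.
    by rewrite not_andP => -[//|/contrapT].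
  have [Pg0 hr] := key g Eg g0; apply: le_trans hr.
  have Pgp : 0 < `|P g| by rewrite normr_gt0.
  rewrite ler_pdivlMr // mul1r.
  have h := pythag g; have := sqr_ge0 `|g - P g|.
  have := normr_ge0 g; nra.
move=> g Eg; have [->|g0] := eqVneq g 0.
  rewrite normr0 expr0n /= mulr_ge0 //; exact: sqr_ge0.
have [Pg0 hr] := key g Eg (elimN eqP g0).
have Pgp : 0 < `|P g| by rewrite normr_gt0.
move: hr; rewrite ler_pdivrMr // => hr.
have := normr_ge0 g; nra.
Qed.

Lemma key_lemma (E : set V) mk z g : 1 <= mk ->
  (forall g, E g -> `|g| ^+ 2 <= mk ^+ 2 * `|P g| ^+ 2) ->
  orth ip W z -> E g -> `|z| ^+ 2 <= mk ^+ 2 * `|z - g| ^+ 2.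
Proof.
move=> m1 hE oz Eg.
set y := g - P g.
have oy : orth ip W y := (hP g).2.
have h1 : `|z - g| ^+ 2 = `|z - y| ^+ 2 + `|P g| ^+ 2.
  have -> : z - g = (z - y) + (- P g) by rewrite /y -addrA -opprD subrK.
  rewrite (normD2 hip) normrN (ipNr hip) (orthB hip oz oy (hP g).1); ring.
have h2 := pythag g.
have h3 := hE g Eg.
have h4 : (`|z| - `|y|) ^+ 2 <= `|z - y| ^+ 2.
  have := ler_dist_dist z y; rewrite ler_norml => /andP [p q].
  have := normr_ge0 (z - y); nra.
have m2 : 1 <= mk ^+ 2 by nra.
have h5 : `|y| ^+ 2 <= (mk ^+ 2 - 1) * `|P g| ^+ 2 by rewrite /y; nra.
have := alg_ineq (`|z| - `|y|) m2 (normr_ge0 y) (normr_ge0 (P g)) h5.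
rewrite subrK h1 => h6; apply: le_trans h6 _; apply: ler_wpM2l; [exact: sqr_ge0 | lra].
Qed.
End Mu.

Section PBDW.
Variables (R : realType) (V : normedModType R) (ip : V -> V -> R)
  (hip : inner_product ip) (W : set V) (P : V -> V) (hP : is_orth_proj ip W P).

Lemma dist_fin (v : V) A a : A a -> exists F, dist v A = F%:E /\ 0 <= F.
Proof.
move=> Aa; have h1 := dist_ge0 v A; have h2 := dist_le v Aa.
move: h1 h2; case: (dist v A) => [F| |] //= h1 h2; exists F; split => //.
Qed.

Lemma orth0 : orth ip W 0.
Proof. by move=> y _; rewrite ip0l. Qed.

Lemma pbdw_sq (E : set V) k mk (ub w us v p : V) : 1 <= mk ->
  (forall g, E g -> `|g| ^+ 2 <= mk ^+ 2 * `|P g| ^+ 2) ->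
  subspace_dim E k ->
  affine w (orth ip W) us ->
  (forall x, affine w (orth ip W) x ->
     (dist us (affine ub E) <= dist x (affine ub E))%E) ->
  affine w (orth ip W) v -> affine ub E p ->
  `|v - us| ^+ 2 <= mk ^+ 2 * `|v - p| ^+ 2.
Proof.
move=> m1 hE hsub Aus hmin Av Vp.
have [F [hF F0]] : exists F, dist us (affine ub E) = F%:E /\ 0 <= F.
  have hub : affine ub E ub by exists 0; [exact: subspace0 hsub | exact: addr0].
  exact: dist_fin hub.
set z := v - us; set b := v - p.
have oz : orth ip W z := affine_orth hip Av Aus.
apply/ler_addgt0Pr => dl dl0.
set C := (`|b| + F + 1) ^+ 2.
set C' := mk ^+ 2 * C + 1.
have C0 : 0 <= C by exact: sqr_ge0.
have C'0 : 0 < C' by rewrite /C' ltr_wpDl // mulr_ge0 // sqr_ge0.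
set t := dl / (dl + 2 * C').

have hpos : 0 < dl + 2 * C' by rewrite addr_gt0 // mulr_gt0.
have tdef : t * (dl + 2 * C') = dl by rewrite /t mulfVK // gt_eqF.
have t0 : 0 < t by rewrite divr_gt0.
have t1 : t <= 1.
  have : t * (dl + 2 * C') <= 1 * (dl + 2 * C') by rewrite tdef mul1r lerDl mulr_ge0 // ltW.
  by rewrite ler_pM2r.
have mk0 : 0 < mk ^+ 2 by nra.
set eta := t * dl / (2 * mk ^+ 2).
have eta0 : 0 < eta by apply: divr_gt0; apply: mulr_gt0.
have etadef : mk ^+ 2 * eta = t * dl / 2.
  by rewrite /eta; field; rewrite gt_eqF // (lt_le_trans ltr01 m1).
set e1 := Num.min 1 (eta / (2 * F + 1)).
have e10 : 0 < e1 by rewrite lt_min ltr01 /= divr_gt0 // ltr_wpDl // mulr_ge0.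
have e11 : e1 <= 1 by rewrite ge_min lexx.
have e1e : e1 * (2 * F + 1) <= eta.
  have : e1 <= eta / (2 * F + 1) by rewrite ge_min lexx orbT.
  by rewrite ler_pdivlMr // ltr_wpDl // mulr_ge0.
have hle : (dist us (affine ub E) <= F%:E)%E by rewrite hF.
have [q [Vq hq]] := dist_approx hle e10.
set a := us - q.
have a0 := normr_ge0 a.
have ha1 : `|a| ^+ 2 <= F ^+ 2 + eta by nra.
have ha2 : `|a| <= F + 1 by lra.
set d := b - a.
have hb : b = a + d by rewrite /d addrC subrK.
move: Vp Vq => [e1' He1 pdef] [e2' He2 qdef].
set g := p - q.
have gdef : g = e1' - e2' by rewrite /g -pdef -qdef opprD addrACA subrr add0r.
have Eg : E g by rewrite gdef; exact: subspaceB hsub He1 He2.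
have hdz : d = z - g by rewrite /d /b /a /z /g subBB.
have hz : `|z| ^+ 2 <= mk ^+ 2 * `|d| ^+ 2.
  rewrite hdz. have := key_lemma hip hP m1 hE oz Eg. exact.
have Axt : affine w (orth ip W) (us + t *: z).
  have ot : orth ip W (t *: z).
    have := orthL hip t oz orth0; by rewrite addr0.
  have := affine_orthD hip Aus ot; exact.
have Vqt : affine ub E (q + t *: g).
  exists (t *: g + e2'); first by have := subspaceL t hsub Eg He2; exact.
  by rewrite -qdef -addrA [e2' + _]addrC.
have hxt : (us + t *: z) - (q + t *: g) = a + t *: d.
  by rewrite -addBB -scalerBr -hdz.
have hF1 : F <= `|a + t *: d|.
  rewrite -lee_fin -hF -hxt; apply: le_trans (hmin _ Axt) _; exact: dist_le Vqt.
have hn1 : `|a + t *: d| ^+ 2 = `|a| ^+ 2 + 2 * (t * ip a d) + t ^+ 2 * `|d| ^+ 2.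
  by rewrite (normD2 hip) (ipZr hip) normrZ ger0_norm ?ltW // exprMn.
have hn2 : `|b| ^+ 2 = `|a| ^+ 2 + 2 * ip a d + `|d| ^+ 2 by rewrite hb (normD2 hip).
have hd : `|d| <= `|b| + F + 1.
  apply: le_trans (ler_normB _ _) _; lra.
have hdC : `|d| ^+ 2 <= C.
  rewrite /C; have := normr_ge0 d; nra.
set I := ip a d in hn1 hn2.
set A2 := `|a| ^+ 2 in ha1 hn1 hn2.
set D2 := `|d| ^+ 2 in hn1 hn2 hz hdC.
set B2 := `|b| ^+ 2 in hn2 *.
set Z2 := `|z| ^+ 2 in hz *.
have hF2 : F ^+ 2 <= A2 + 2 * (t * I) + t ^+ 2 * D2.
  rewrite -hn1; have := normr_ge0 (a + t *: d); nra.
have A20 : 0 <= A2 by exact: sqr_ge0.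
have D20 : 0 <= D2 by exact: sqr_ge0.
have eB : t * B2 = t * A2 + 2 * (t * I) + t * D2 by rewrite hn2; ring.
have tA2 : 0 <= t * A2 by rewrite mulr_ge0 // ltW.
have s1 : t * D2 - eta - t ^+ 2 * D2 <= t * B2 by lra.
have s2 : t * Z2 <= mk ^+ 2 * (t * D2).
  rewrite [mk ^+ 2 * _]mulrCA; apply: ler_wpM2l; [exact: ltW | exact: hz].
have s3 : mk ^+ 2 * (t ^+ 2 * D2) <= t * (t * C').
  have : mk ^+ 2 * D2 <= C' by rewrite /C'; nra.
  move=> h; rewrite mulrCA expr2 -mulrA; apply: ler_wpM2l; first exact: ltW.
  apply: ler_wpM2l; [exact: ltW | exact: h].
have s4 : t * C' <= dl / 2.
  have : t * dl + 2 * (t * C') = dl by rewrite -[RHS]tdef; ring.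
  have : 0 < t * dl by rewrite mulr_gt0.
  lra.
have s5 : t * (t * C') <= t * (dl / 2) by rewrite ler_pM2l.
have s6 : mk ^+ 2 * (t * D2 - eta - t ^+ 2 * D2) <= mk ^+ 2 * (t * B2).
  by rewrite ler_pM2l.
have s7 : t * Z2 <= t * (mk ^+ 2 * B2 + dl).
  move: s6; rewrite !mulrBr etadef => s6.
  have : t * (mk ^+ 2 * B2 + dl) = mk ^+ 2 * (t * B2) + t * dl by ring.
  have : t * (dl / 2) = t * dl / 2 by ring.
  lra.
by move: s7; rewrite ler_pM2l.
Qed.

Lemma pbdw (E : set V) k mk (ub w us v : V) X : 1 <= mk ->
  (forall g, E g -> `|g| ^+ 2 <= mk ^+ 2 * `|P g| ^+ 2) ->
  subspace_dim E k ->
  affine w (orth ip W) us ->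
  (forall x, affine w (orth ip W) x ->
     (dist us (affine ub E) <= dist x (affine ub E))%E) ->
  affine w (orth ip W) v -> (dist v (affine ub E) <= X%:E)%E ->
  `|v - us| <= mk * X.
Proof.
move=> m1 hE hsub Aus hmin Av hX.
have mk0 : 0 < mk by apply: lt_le_trans m1.
apply/ler_addgt0Pr => e e0.
have dl0 : 0 < e / mk by rewrite divr_gt0.
have [p [Vp hp]] := dist_approx hX dl0.
have h := pbdw_sq m1 hE hsub Aus hmin Av Vp.
have hp0 := normr_ge0 (v - p).
have hu0 := normr_ge0 (v - us).
have -> : mk * X + e = mk * (X + e / mk) by rewrite mulrDr mulrCA divff ?mulr1 // gt_eqF.
have hm : mk * `|v - p| <= mk * (X + e / mk) by rewrite ler_pM2l // ltW.
have hsq : `|v - us| ^+ 2 <= (mk * (X + e / mk)) ^+ 2.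
  apply: le_trans h _; rewrite -exprMn; apply: lerXn2r; rewrite ?nnegrE //.
    exact: mulr_ge0 (ltW mk0) hp0.
  by apply: le_trans hm; apply: mulr_ge0 (ltW mk0) hp0.
have hmx : 0 <= mk * (X + e / mk) by apply: le_trans hm; apply: mulr_ge0 (ltW mk0) hp0.
nra.
Qed.
End PBDW.

Unset Implicit Arguments.

Theorem theorem3p6
  (R : realType) (V : completeNormedModType R)
  (ip : V -> V -> R) (hip : inner_product ip)
  (d : nat) (Y : set 'rV[R]_d) (hY : compact Y)
  (uf : 'rV[R]_d -> V) (huf : {within Y, continuous uf})
  (m : nat) (W : set V) (hW : subspace_dim W m)
  (PW : V -> V) (hPW : is_orth_proj ip W PW)
  (K : nat) (Mk : 'I_K -> set V)
  (hM : uf @` Y = \bigcup_(k in [set: 'I_K]) Mk k)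
  (ubar : 'I_K -> V) (Vbar : 'I_K -> set V) (n : 'I_K -> nat)
  (hVbar : forall k, subspace_dim (Vbar k) (n k) /\ (n k <= m)%N)
  (eps : 'I_K -> R)
  (heps : forall k, (ereal_sup [set dist u (affine (ubar k) (Vbar k)) | u in Mk k]
                      <= (eps k)%:E)%E)
  (muk : 'I_K -> R) (hmu : forall k, mu ip W PW (Vbar k) = (muk k)%:E)
  (ustar : 'I_K -> V -> V)
  (hustar : forall k w, W w ->
     affine w (orth ip W) (ustar k w) /\
     forall v, affine w (orth ip W) v ->
       (dist (ustar k w) (affine (ubar k) (Vbar k))
          <= dist v (affine (ubar k) (Vbar k)))%E)
  (Sur : 'I_K -> V -> R) (r Rc : R) (hr : 0 < r) (hrR : r <= Rc)
  (hS : forall k v, 0 <= Sur k v /\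
     (r%:E * dist v (Mk k) <= (Sur k v)%:E)%E /\
     ((Sur k v)%:E <= Rc%:E * dist v (Mk k))%E) :
  forall u, (uf @` Y) u ->
  let w := PW u in
  let Mw := uf @` Y `&` affine w (orth ip W) in
  let Ek := fun k => [set v | affine w (orth ip W) v /\
                        (dist v (affine (ubar k) (Vbar k)) <= (eps k)%:E)%E] in
  let S := [set k : 'I_K | Sur k (ustar k w) <= Rc * muk k * eps k] in
  let Mwstar := \bigcup_(k in S) Ek k in
  Mw `<=` Mwstar /\
  (forall sigma : R, 0 < sigma -> (forall k, muk k * eps k <= sigma) ->
     (ereal_sup [set ereal_inf [set (`|v - u'|)%:E | u' in Mw] | v in Mwstar]
        <= delta ip W (uf @` Y) ((Rc / r + 1) * sigma))%E).
Proof.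
move=> u Mu w Mw Ek S Mwstar.
have Ww : W w := (hPW u).1.
have Au : affine w (orth ip W) u.
  by exists (u - PW u); [exact: (hPW u).2 | rewrite /w addrC subrK].
have Rc0 : 0 <= Rc by apply: le_trans (ltW hr) hrR.
have hpb : forall k v X, affine w (orth ip W) v ->
    (dist v (affine (ubar k) (Vbar k)) <= X%:E)%E ->
    `|v - ustar k w| <= muk k * X.
  move=> k v X Av hX.
  have [m1 hE] := mu_facts hip hPW (hmu k).
  have [hus hmin] := hustar k w Ww.
  exact: (pbdw hip hPW m1 hE (hVbar k).1 hus hmin Av hX).
split.
  move=> v [Mv Av]; have := Mv; rewrite hM => -[k _ Mkv].
  have hd : (dist v (affine (ubar k) (Vbar k)) <= (eps k)%:E)%E.
    apply: le_trans (heps k); apply: ereal_sup_ubound; by exists v.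
  exists k; last by split.
  rewrite /S /=.
  have h1 := hpb k v (eps k) Av hd.
  have h2 := (hS k (ustar k w)).2.2.
  have h3 : (dist (ustar k w) (Mk k) <= (`|v - ustar k w|)%:E)%E.
    by rewrite distrC; exact: dist_le.
  have h4 : ((Sur k (ustar k w))%:E <= (Rc * `|v - ustar k w|)%:E)%E.
    by apply: le_trans h2 _; rewrite EFinM; apply: lee_wpmul2l; rewrite ?lee_fin.
  rewrite lee_fin in h4; apply: le_trans h4 _; rewrite -mulrA; exact: ler_wpM2l.
move=> sigma s0 hadm.
have sig0 : 0 <= (Rc / r + 1) * sigma.
  apply: mulr_ge0; last exact: ltW.
  by apply: addr_ge0 => //; apply: divr_ge0 => //; exact: ltW.
have MwU : Mw u by split.
apply: ge_ereal_sup => _ [v [k Sk [Av hdv]] <-].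
apply: le_trans (ereal_inf_lbound _) _; first by exists u.
apply: ereal_sup_ubound; exists (v, u) => //=; split; last split.
- rewrite /Msig /=.
  set us := ustar k w.
  have h1 := hpb k v (eps k) Av hdv.
  have [_ [h2 _]] := hS k us.
  have [D [hD D0]] : exists D, dist us (Mk k) = D%:E /\ 0 <= D.
    move: h2 (dist_ge0 us (Mk k)); case: (dist us (Mk k)) => [D| |] //=.
      by move=> _ h; exists D; split; rewrite // -lee_fin.
    by rewrite mulry gtr0_sg // mul1e leye_eq.
  rewrite hD -EFinM lee_fin in h2.
  have hDb : D <= Rc / r * sigma.
    have : r * D <= Rc * muk k * eps k by apply: le_trans h2 Sk.
    rewrite -mulrA => h; have := hadm k => ha.
    have : r * D <= Rc * sigma by apply: le_trans h _; exact: ler_wpM2l.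
    by rewrite mulrAC ler_pdivlMr // mulrC.
  have hsub : Mk k `<=` uf @` Y by rewrite hM => x Mx; exists k.
  apply: le_trans (dist_sub v hsub) _.
  apply: dist_ub => dl dl0.
  have hle : (dist us (Mk k) <= D%:E)%E by rewrite hD.
  have [q [Mq hq]] := dist_approx hle dl0.
  exists q; split => //.
  apply: le_trans (ler_distD us v q) _.
  have := hadm k; lra.
- rewrite /Msig /=; apply: le_trans (dist_le u Mu) _; by rewrite subrr normr0 lee_fin.
- by have := affine_orth hip Av Au.
Qed.
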